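(* Let $a,c$ be nonzero constants, $N\ge1$, and $c_i,d_i,p_i,q_i,\xi_{i0},\eta_{i0}$ arbitrary real or complex parameters (with $p_i,q_i\neq0$, $1-ap_i,1-aq_i\neq0$). Define $$\phi^{(i)}_{n,m}(k)=c_ip_i^n(1-cp_i)^m(1-ap_i)^{-k}e^{\xi_i}+d_iq_i^n(1-cq_i)^m(1-aq_i)^{-k}e^{\eta_i},\quad \xi_i=p_i^{-1}x_{-1}+\xi_{i0},\ \eta_i=q_i^{-1}x_{-1}+\eta_{i0},$$ and $\tau_{n,m}(x_{-1},k)=\det(\phi^{(i)}_{n+j-1,m}(k))_{1\le i,j\le N}$; alternatively (with $p_i+q_j\neq0$, $1+aq_j\ne0$, $c_{ij}$ arbitrary constants, $\eta_j=q_j^{-1}x_{-1}+\eta_{j0}$) $$\tau_{n,m}(x_{-1},k)=\det\Big(c_{ij}+\frac{1}{p_i+q_j}\Big(-\frac{p_i}{q_j}\Big)^n\Big(\frac{1-cp_i}{1+cq_j}\Big)^m\Big(\frac{1-ap_i}{1+aq_j}\Big)^{-k}e^{\xi_i+\eta_j}\Big)_{1\le i,j\le N}.$$ Then for all integers $n,m,k$: $$\Big(\tfrac1aD_{x_{-1}}-1\Big)\tau_{n,m}(k+1)\cdot\tau_{n,m}(k)+\tau_{n+1,m}(k+1)\tau_{n-1,m}(k)=0,$$ $$\Big(\tfrac1cD_{x_{-1}}-1\Big)\tau_{n,m}(k)\cdot\tau_{n,m+1}(k)+\tau_{n+1,m}(k)\tau_{n-1,m+1}(k)=0.$$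
   Context: Hirota operator: $D_x\,a\cdot b=(\partial_x-\partial_{x'})a(x)b(x')|_{x'=x}=a_xb-ab_x$; the term ''$-1$'' acts as $-ab$. *)

(* Defs.v *)
From mathcomp Require Import all_boot all_order all_algebra.
From mathcomp Require Import all_classical all_reals all_analysis.
From mathcomp Require Export complex.
Import GRing.Theory Num.Theory.

Set Implicit Arguments. Unset Strict Implicit. Unset Printing Implicit Defensive.

Local Open Scope ring_scope.
Local Open Scope complex_scope.

Section Defs.
Variable R : realType.
Local Notation C := R[i].

Definition cexp (z : C) : C :=
  (expR (complex.Re z))%:C * (cos (complex.Im z) +i* sin (complex.Im z)).

Definition cderiv (f : R -> C) (x : R) : C :=
  derive1 (fun t => complex.Re (f t)) x +i* derive1 (fun t => complex.Im (f t)) x.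

(* Hirota bilinear operator: (1/a D_x - 1) f . g = a^-1 (f_x g - f g_x) - f g *)
Definition hirota (a : C) (f g : R -> C) (x : R) : C :=
  a^-1 * (cderiv f x * g x - f x * cderiv g x) - f x * g x.

Definition bilinear_pair (a c : C) (tau : int -> int -> int -> R -> C) : Prop :=
  forall (n m k : int) (x : R),
    hirota a (tau n m (k + 1)) (tau n m k) x
      + tau (n + 1) m (k + 1) x * tau (n - 1) m k x = 0
 /\ hirota c (tau n m k) (tau n (m + 1) k) x
      + tau (n + 1) m k x * tau (n - 1) (m + 1) k x = 0.

Variable N : nat.

Definition phi1 (a c : C) (ci di p q xi0 eta0 : 'I_N -> C)
  (i : 'I_N) (n m k : int) (x : R) : C :=
  ci i * p i ^ n * (1 - c * p i) ^ m * (1 - a * p i) ^ (- k)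
    * cexp ((p i)^-1 * x%:C + xi0 i)
  + di i * q i ^ n * (1 - c * q i) ^ m * (1 - a * q i) ^ (- k)
    * cexp ((q i)^-1 * x%:C + eta0 i).

(* tau_{n,m}(x,k) = det (phi^{(i)}_{n+j-1,m}(k))_{1<=i,j<=N};
   with 0-based j : 'I_N this is phi^{(i)}_{n+j,m}(k) *)
Definition tau1 (a c : C) (ci di p q xi0 eta0 : 'I_N -> C)
  (n m k : int) (x : R) : C :=
  \det (\matrix_(i < N, j < N) phi1 a c ci di p q xi0 eta0 i (n + (j : nat)%:Z) m k x).

Definition tau2 (a c : C) (cij : 'I_N -> 'I_N -> C) (p q xi0 eta0 : 'I_N -> C)
  (n m k : int) (x : R) : C :=
  \det (\matrix_(i < N, j < N)
    (cij i j + (p i + q j)^-1 * (- (p i / q j)) ^ n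
       * ((1 - c * p i) / (1 + c * q j)) ^ m
       * ((1 - a * p i) / (1 + a * q j)) ^ (- k)
       * cexp (((p i)^-1 * x%:C + xi0 i) + ((q j)^-1 * x%:C + eta0 j)))).

End Defs.

(* Main.v *)
Require Import Defs.
From mathcomp Require Import all_boot all_order all_algebra.
From mathcomp Require Import all_classical all_reals all_analysis.
From mathcomp Require Import complex.
From mathcomp Require Import perm ring.
Set Implicit Arguments. Unset Strict Implicit. Unset Printing Implicit Defensive.
Import GRing.Theory Num.Theory.
Local Open Scope ring_scope.
Local Open Scope complex_scope.


Section Alg.
Variable F : fieldType.

Definition rowsM n (f : 'I_n -> 'rV[F]_n) : 'M[F]_n := \matrix_(i, j) f i 0 j.
Definition setr n (f : 'I_n -> 'rV[F]_n) (i0 : 'I_n) (r : 'rV[F]_n) :=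
  fun i => if i == i0 then r else f i.

Lemma rowsM_ext n (f g : 'I_n -> 'rV[F]_n) : (forall i, f i = g i) -> rowsM f = rowsM g.
Proof. by move=> e; apply/matrixP=> i j; rewrite !mxE e. Qed.

Lemma row_rowsM n (f : 'I_n -> 'rV[F]_n) i : row i (rowsM f) = f i.
Proof. by apply/rowP=> j; rewrite !mxE. Qed.

Lemma rowsM_row n (A : 'M[F]_n) : rowsM (fun i => row i A) = A.
Proof. by apply/matrixP => i j; rewrite !mxE. Qed.

Lemma cofactor_setr n f (i0 : 'I_n) r j :
  cofactor (rowsM (setr f i0 r)) i0 j = cofactor (rowsM f) i0 j.
Proof.
rewrite !expand_cofactor; apply: eq_bigr => s _; congr (_ * _).
by apply: eq_bigr => k; rewrite eq_sym => /negPf nk; rewrite !mxE /setr nk.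
Qed.

Lemma det_setrE n f (i0 : 'I_n) r :
  \det (rowsM (setr f i0 r)) = \sum_j r 0 j * cofactor (rowsM f) i0 j.
Proof.
rewrite (expand_det_row _ i0); apply: eq_bigr => j _.
by rewrite cofactor_setr !mxE /setr eqxx.
Qed.

Definition detr n f (i0 : 'I_n) r := \det (rowsM (setr f i0 r)).

Lemma detrE n f (i0 : 'I_n) r :
  detr f i0 r = (r *m \col_j cofactor (rowsM f) i0 j) 0 0.
Proof. by rewrite /detr det_setrE mxE; apply: eq_bigr => j _; rewrite mxE. Qed.

Lemma detrD n f (i0 : 'I_n) r r' : detr f i0 (r + r') = detr f i0 r + detr f i0 r'.
Proof. by rewrite !detrE mulmxDl mxE. Qed.

Lemma detrZ n f (i0 : 'I_n) c r : detr f i0 (c *: r) = c * detr f i0 r.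
Proof. by rewrite !detrE -scalemxAl mxE. Qed.

Lemma detrN n f (i0 : 'I_n) r : detr f i0 (- r) = - detr f i0 r.
Proof. by rewrite -scaleN1r detrZ mulN1r. Qed.

Lemma detrB n f (i0 : 'I_n) r r' : detr f i0 (r - r') = detr f i0 r - detr f i0 r'.
Proof. by rewrite detrD detrN. Qed.

Lemma detr_sum n f (i0 : 'I_n) (c : 'I_n -> F) (r : 'I_n -> 'rV[F]_n) :
  detr f i0 (\sum_k c k *: r k) = \sum_k c k * detr f i0 (r k).
Proof.
rewrite detrE mulmx_suml summxE; apply: eq_bigr => k _.
by rewrite -scalemxAl mxE detrE.
Qed.

Lemma detr_dup n f (i0 j : 'I_n) : j != i0 -> detr f i0 (f j) = 0.
Proof.
move=> ne; apply: (@determinant_alternate _ _ _ i0 j); first by rewrite eq_sym.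
by move=> k; rewrite !mxE /setr eqxx (negPf ne).
Qed.

Lemma detr_self n f (i0 : 'I_n) : detr f i0 (f i0) = \det (rowsM f).
Proof. by rewrite /detr; congr (\det _); apply: rowsM_ext => i; rewrite /setr; case: eqP => // ->. Qed.

Lemma detr_ext n f g (i0 : 'I_n) r : (forall i, i != i0 -> f i = g i) -> detr f i0 r = detr g i0 r.
Proof.
move=> e; rewrite /detr; congr (\det _); apply: rowsM_ext => i; rewrite /setr.
by case: eqP => // /eqP /e.
Qed.

Lemma cramer_row n (A : 'M[F]_n) (z : 'rV[F]_n) :
  \det A *: z = \sum_j detr (fun i => row i A) j z *: row j A.
Proof.
have -> : \det A *: z = z *m \adj A *m A by rewrite -mulmxA mul_adj_mx mul_mx_scalar.
rewrite mulmx_sum_row; apply: eq_bigr => j _; congr (_ *: _).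
rewrite /detr det_setrE rowsM_row mxE; apply: eq_bigr => i _; by rewrite mxE.
Qed.

Section Pl.
Variables (n : nat) (f : 'I_n -> 'rV[F]_n) (i0 i1 : 'I_n).
Hypothesis i01 : i0 != i1.

Definition br p q := \det (rowsM (setr (setr f i1 q) i0 p)).

Lemma brEl p q : br p q = detr (setr f i1 q) i0 p.
Proof. by []. Qed.

Lemma brEr p q : br p q = detr (setr f i0 p) i1 q.
Proof.
rewrite /br /detr; congr (\det _); apply: rowsM_ext => i; rewrite /setr.
have [->|ni0] := eqVneq i i0; first by rewrite ?eqxx (negPf i01).
by case: (i == i1).
Qed.

Lemma brDl p p' q : br (p + p') q = br p q + br p' q.
Proof. by rewrite !brEl detrD. Qed.
Lemma brZl c p q : br (c *: p) q = c * br p q.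
Proof. by rewrite !brEl detrZ. Qed.
Lemma brNl p q : br (- p) q = - br p q.
Proof. by rewrite !brEl detrN. Qed.
Lemma brBl p p' q : br (p - p') q = br p q - br p' q.
Proof. by rewrite brDl brNl. Qed.
Lemma brDr p q q' : br p (q + q') = br p q + br p q'.
Proof. by rewrite !brEr detrD. Qed.
Lemma brZr c p q : br p (c *: q) = c * br p q.
Proof. by rewrite !brEr detrZ. Qed.
Lemma brNr p q : br p (- q) = - br p q.
Proof. by rewrite !brEr detrN. Qed.
Lemma brBr p q q' : br p (q - q') = br p q - br p q'.
Proof. by rewrite brDr brNr. Qed.

Lemma br_pp p : br p p = 0.
Proof.
apply: (@determinant_alternate _ _ _ i0 i1) => // k.
have i10 : i1 != i0 by rewrite eq_sym.
by rewrite !mxE /setr !eqxx (negPf i10).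
Qed.

Lemma br_anti p q : br q p = - br p q.
Proof.
have := br_pp (p + q); rewrite brDl !brDr !br_pp add0r addr0.
by move/eqP; rewrite addr_eq0 => /eqP ->; rewrite opprK.
Qed.

Lemma br_midl j q : j != i0 -> j != i1 -> br (f j) q = 0.
Proof.
move=> h0 h1; rewrite brEl.
have -> : f j = setr f i1 q j by rewrite /setr (negPf h1).
exact: detr_dup.
Qed.

Lemma plucker x y z v :
  br x y * br z v - br x z * br y v + br x v * br y z = 0.
Proof.
set A := rowsM (setr (setr f i1 y) i0 x).
have H := cramer_row A z.
have := congr1 (detr (setr f i1 v) i0) H.
rewrite detrZ detr_sum -!brEl.
have i10 : i1 != i0 by rewrite eq_sym.
rewrite (bigD1 i0) //= (bigD1 i1) //= big1 ?addr0; last first.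
  move=> j /andP [h1 h0]; rewrite /A row_rowsM /setr (negPf h1) (negPf h0).
  by rewrite -brEl br_midl // mulr0.
have r0 : row i0 A = x by rewrite /A row_rowsM /setr eqxx.
have r1 : row i1 A = y by rewrite /A row_rowsM /setr (negPf i10) eqxx.
have c0 : detr (fun i => row i A) i0 z = br z y.
  rewrite /br /detr; congr (\det _); apply: rowsM_ext => i.
  by rewrite /A /setr row_rowsM /setr; case: eqP.
have c1 : detr (fun i => row i A) i1 z = br x z.
  rewrite /br /detr; congr (\det _); apply: rowsM_ext => i.
  rewrite /A /setr row_rowsM /setr.
  case: (eqVneq i i1) => [->|]; first by rewrite (negPf i10).
  done.
rewrite r0 r1 c0 c1 -!brEl (br_anti y z).
have -> : \det A = br x y by [].
move=> HH; rewrite HH; ring.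
Qed.

End Pl.

Lemma det_addrows n (g : 'I_n -> 'rV[F]_n) (j0 : 'I_n) (c : 'I_n -> F) :
  c j0 = 0 -> \det (rowsM (fun i => g i + c i *: g j0)) = \det (rowsM g).
Proof.
move=> cj0.
have step : forall k, (k <= n)%N ->
  \det (rowsM (fun i : 'I_n => if (i < k)%N then g i + c i *: g j0 else g i))
    = \det (rowsM g).
  elim=> [|k IH] Hk; first by congr (\det _); apply: rowsM_ext.
  set kk := Ordinal Hk.
  set H := fun i : 'I_n => if (i < k)%N then g i + c i *: g j0 else g i.
  have Hj0 : H j0 = g j0 by rewrite /H; case: ifP => _; rewrite ?cj0 ?scale0r ?addr0.
  have -> : rowsM (fun i : 'I_n => if (i < k.+1)%N then g i + c i *: g j0 else g i)
      = rowsM (setr H kk (H kk + c kk *: H j0)).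
    apply: rowsM_ext => i; rewrite Hj0 /setr /H.
    have [->|nik] := eqVneq i kk; first by rewrite /= ltnSn ltnn.
    rewrite ltnS leq_eqVlt.
    have -> : (nat_of_ord i == k) = false.
      by apply/negbTE; apply: contra nik => /eqP e; apply/eqP/val_inj.
    done.
  rewrite -/(detr H kk _) detrD detrZ detr_self.
  have [e|ne] := eqVneq j0 kk.
    by rewrite -e cj0 mul0r addr0; apply: IH; apply: ltnW.
  by rewrite detr_dup // mulr0 addr0; apply: IH; apply: ltnW.
have := step n (leqnn n); rewrite -[X in _ = X -> _]/(\det (rowsM g)) => <-.
by congr (\det _); apply: rowsM_ext => i; rewrite ltn_ord.
Qed.

Lemma det_rank1 n (M : 'M[F]_n) (u : 'cV[F]_n) (v : 'rV[F]_n) :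
  \det (M + u *m v) = \det M + \sum_i u i 0 * detr (fun i => row i M) i v.
Proof.
have step : forall k, (k <= n)%N ->
  \det (rowsM (fun i : 'I_n => if (i < k)%N then row i M + u i 0 *: v else row i M))
    = \det M + \sum_(i : 'I_n | (i < k)%N) u i 0 * detr (fun i => row i M) i v.
  elim=> [|k IH] Hk.
    rewrite big_pred0 // addr0; rewrite -[in RHS](rowsM_row M).
    by congr (\det _); apply: rowsM_ext.
  set kk := Ordinal Hk.
  set H := fun i : 'I_n => if (i < k)%N then row i M + u i 0 *: v else row i M.
  have -> : rowsM (fun i : 'I_n => if (i < k.+1)%N then row i M + u i 0 *: v else row i M)
      = rowsM (setr H kk (H kk + u kk 0 *: v)).
    apply: rowsM_ext => i; rewrite /setr /H.
    have [->|nik] := eqVneq i kk; first by rewrite /= ltnSn ltnn.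
    rewrite ltnS leq_eqVlt.
    have -> : (nat_of_ord i == k) = false.
      by apply/negbTE; apply: contra nik => /eqP e; apply/eqP/val_inj.
    done.
  rewrite -/(detr H kk _) detrD detrZ detr_self IH; last exact: ltnW.
  have -> : detr H kk v = detr (fun i => row i M) kk v.
    rewrite /detr.
    have := @det_addrows n (setr (fun i => row i M) kk v) kk
      (fun i => if (i < k)%N then u i 0 else 0).
    rewrite /= ltnn => <- //; congr (\det _); apply: rowsM_ext => i.
    rewrite /setr /H; have [->|nik] := eqVneq i kk; first by rewrite /= ltnn scale0r addr0.
    by rewrite eqxx; case: ifP => _; rewrite ?scale0r ?addr0.
  rewrite [in RHS](bigD1 kk) /=; last exact: ltnSn.
  rewrite -addrA; congr (_ + _); rewrite addrC; congr (_ + _).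
  apply: eq_bigl => i; rewrite ltnS.
  have [->|nik] := eqVneq i kk; first by rewrite /= ltnn andbF.
  rewrite andbT ltn_neqAle.
  have -> : (nat_of_ord i != k) by apply: contra nik => /eqP e; apply/eqP/val_inj.
  done.
have := step n (leqnn n).
have -> : \sum_(i : 'I_n | (i < n)%N) u i 0 * detr (fun i => row i M) i v
     = \sum_i u i 0 * detr (fun i => row i M) i v by apply: eq_bigl => i; rewrite ltn_ord.
move=> <-; congr (\det _); apply/matrixP => i j.
by rewrite !mxE ltn_ord big_ord1 !mxE.
Qed.

Lemma det_schur m k (M : 'M[F]_m) (U : 'M[F]_(m,k)) (C : 'M[F]_(k,m)) :
  \det (block_mx M U C 1%:M) = \det (M - U *m C).
Proof.
have -> : block_mx M U C 1%:M
   = block_mx 1%:M U 0 1%:M *m block_mx (M - U *m C) 0 C 1%:M.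
  by rewrite mulmx_block ?mul1mx ?mul0mx ?mulmx0 ?mulmx1 ?add0r ?addr0 ?subrK.
by rewrite det_mulmx det_ublock det_lblock !det1 !mul1r mulr1.
Qed.

End Alg.

Section GramCore.
Variables (F : fieldType) (N : nat) (M : 'M[F]_N) (u1 u2 : 'cV[F]_N) (b d : 'rV[F]_N).
Definition Qg (x y : 'rV[F]_N) := \det (M + u1 *m x + u2 *m y).

Lemma gram_core : exists E P1 P2 S1 S2 Z : F,
  (forall x1 x2 y1 y2, Qg (x1 *: b + x2 *: d) (y1 *: b + y2 *: d)
     = E - (y1 * P1 + y2 * P2) - (x1 * S1 + x2 * S2) + (x1 * y2 - x2 * y1) * Z)
  /\ E * Z + P1 * S2 - P2 * S1 = 0.
Proof.
pose Bl : 'M[F]_(N + 2) := block_mx M (row_mx u1 u2) 0 1%:M.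
pose f := fun i : 'I_(N + 2) => row i Bl.
pose i0 : 'I_(N + 2) := rshift N (0 : 'I_2).
pose i1 : 'I_(N + 2) := rshift N (1 : 'I_2).
have i01 : i0 != i1 by rewrite eq_rshift.
pose e1 : 'rV[F]_2 := delta_mx 0 0.
pose e2 : 'rV[F]_2 := delta_mx 0 1.
have key : forall x y, br f i0 i1 (row_mx x e1) (row_mx y e2)
    = \det (M - u1 *m x - u2 *m y).
  move=> x y; rewrite /br.
  have -> : rowsM (setr (setr f i1 (row_mx y e2)) i0 (row_mx x e1))
      = block_mx M (row_mx u1 u2) (col_mx x y) 1%:M.
    apply/matrixP => i j; rewrite mxE /setr.
    rewrite -(fintype.splitK i); case: (fintype.split i) => [i'|k] /=.
      have e : fintype.split (lshift 2 i') = inl i' := fintype.unsplitK (inl _ i').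
      by rewrite !eq_lrshift /f !mxE e.
    have e : fintype.split (rshift N k) = inr k := fintype.unsplitK (inr _ k).
    rewrite /f !eq_rshift !mxE e.
    pose k' : 'I_(1 + 1) := k; change k with k'.
    rewrite -(fintype.splitK k'); case: (fintype.split k') => [k0|k1] /=; rewrite ?ord1.
      have e0 : fintype.split (lshift 1 (0 : 'I_1)) = inl 0 := fintype.unsplitK (inl _ 0).
      rewrite /= !mxE; case: (fintype.split j) => [j'|j'] /=; first by rewrite col_mxEu.
      rewrite !mxE eqxx /=; congr (_%:R).
      by rewrite -!val_eqE /= eq_sym.
    rewrite /= !mxE; case: (fintype.split j) => [j'|j'] /=; first by rewrite col_mxEd.
    rewrite !mxE eqxx /=; congr (_%:R).
    by rewrite -!val_eqE /= eq_sym.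
  rewrite det_schur; have := mul_row_col u1 u2 x y => /= ->; by rewrite opprD addrA.
pose E1 : 'rV[F]_(N + 2) := row_mx 0 e1.
pose E2 : 'rV[F]_(N + 2) := row_mx 0 e2.
pose bb : 'rV[F]_(N + 2) := row_mx b 0.
pose dd : 'rV[F]_(N + 2) := row_mx d 0.
pose B := br f i0 i1.
exists (B E1 E2), (B E1 bb), (B E1 dd), (B bb E2), (B dd E2), (B bb dd).
split.
  move=> x1 x2 y1 y2; rewrite /Qg.
  have -> : M + u1 *m (x1 *: b + x2 *: d) + u2 *m (y1 *: b + y2 *: d)
      = M - u1 *m (-(x1 *: b + x2 *: d)) - u2 *m (-(y1 *: b + y2 *: d)).
    by rewrite !mulmxN !opprK.
  rewrite -key.
  have ex : forall z1 z2 (e : 'rV[F]_2), row_mx (-(z1 *: b + z2 *: d)) e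
      = row_mx 0 e - (z1 *: bb + z2 *: dd).
    move=> z1 z2 e; rewrite /bb /dd !scale_row_mx !add_row_mx opp_row_mx add_row_mx.
    by rewrite !scaler0 !addr0 sub0r subr0.
  rewrite !ex /B -/E1 -/E2.
  rewrite brBl !(brBr f i01) !brDl !(brDr f i01) !brZl !(brZr f i01) !(br_pp f i01) (br_anti f i01 bb dd).
  ring.
have := plucker f i01 E1 E2 bb dd.
rewrite (br_anti f i01 dd E2) (br_anti f i01 bb E2) -/B => h.
by rewrite -[RHS]h; ring.
Qed.
End GramCore.

Definition tauG (F : fieldType) n (V : int -> 'rV[F]_n) :=
  \det (rowsM (fun i : 'I_n => V (i : nat)%:Z)).
Definition taudG (F : fieldType) n (V : int -> 'rV[F]_n.+1) :=
  \det (rowsM (setr (fun i : 'I_n.+1 => V (i : nat)%:Z) ord0 (V (-1)))).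

Section Cas.
Variables (F : fieldType) (n : nat) (a : F) (U : int -> 'rV[F]_(n.+2)).
Hypothesis a0 : a != 0.
Local Notation N := n.+2.
Definition Wc (j : int) := U j - a *: U (j + 1).
Definition fW : 'I_N -> 'rV[F]_N := fun i => Wc (i : nat)%:Z.
Definition brc := br fW ord0 ord_max.
Lemma i01c : (ord0 : 'I_N) != ord_max. Proof. by rewrite -val_eqE. Qed.

Lemma intS' (k : nat) : (k%:Z + 1 = k.+1%:Z)%R.
Proof. by rewrite -addn1 PoszD. Qed.

Lemma conv_up p : \det (rowsM (setr (fun i : 'I_N => U (i : nat)%:Z) ord0 p))
   = brc p (U n.+1%:Z).
Proof.
pose G k := fun i : 'I_N => if (i : nat) == 0%N then p
   else if (i < k)%N && (i < n.+1)%N then Wc (i : nat)%:Z else U (i : nat)%:Z.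
have step : forall k, (1 <= k <= n.+1)%N -> \det (rowsM (G k)) = \det (rowsM (G 1%N)).
  elim=> [//|k IH] /andP [k1 kn].
  have [->//|k0] := eqVneq k 0%N.
  have k1' : (1 <= k)%N by rewrite lt0n.
  rewrite -IH ?k1' ?(ltnW kn) //.
  pose kk : 'I_N := inord k. pose kk1 : 'I_N := inord k.+1.
  have vkk : (kk : nat) = k by rewrite inordK // ltnS ltnW.
  have vkk1 : (kk1 : nat) = k.+1 by rewrite inordK // ltnS.
  have kk10 : kk1 != kk.
    apply/negP => /eqP /(congr1 (@nat_of_ord N)); rewrite vkk vkk1 => e.
    by move/eqP: e; rewrite eqn_leq ltnn.
  have -> : rowsM (G k.+1) = rowsM (setr (G k) kk (G k kk + (-a) *: G k kk1)).
    apply: rowsM_ext => i; rewrite /setr.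
    have [->|nik] := eqVneq i kk.
      rewrite /G vkk vkk1 (negPf k0) /= ltnSn ltnn kn /= ltnNge leqnSn /=.
      by rewrite /Wc intS' scaleNr.
    rewrite /G; case: ifP => // _.
    have -> : (i < k.+1)%N = (i < k)%N.
      rewrite ltnS ltn_neqAle.
      have -> : (nat_of_ord i != k).
        apply: contra nik => /eqP e; apply/eqP/val_inj; rewrite /= e; exact: esym vkk.
      done.
    done.
  by rewrite -/(detr (G k) kk _) detrD detrZ detr_self detr_dup // mulr0 addr0.
have := step n.+1; rewrite leqnn ltn0Sn => /(_ isT) h.
rewrite /brc /br.
transitivity (\det (rowsM (G 1%N))).
  congr (\det _); apply: rowsM_ext => i; rewrite /setr /G.
  case: (eqVneq i ord0) => [->//|ni0].
  have -> : ((i : nat) == 0%N) = false by apply/negbTE; apply: contra ni0 => /eqP e; apply/eqP/val_inj.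
  by rewrite ltnNge lt0n -[(i : nat) == 0%N]/(i == ord0) ni0.
rewrite -h; congr (\det _); apply: rowsM_ext => i; rewrite /setr /G.
case: (eqVneq i ord0) => [->//|ni0].
have -> : ((i : nat) == 0%N) = false by apply/negbTE; apply: contra ni0 => /eqP e; apply/eqP/val_inj.
case: (eqVneq i ord_max) => [->|nim]; first by rewrite /= ltnn andbF.
have -> : (i < n.+1)%N.
  rewrite ltn_neqAle -ltnS ltn_ord andbT; apply: contra nim => /eqP e; apply/eqP/val_inj; exact: e.
by [].
Qed.

Lemma conv_down q :
  (-a) ^+ n * \det (rowsM (setr (fun i : 'I_N => U ((i : nat)%:Z + 1)) ord_max q))
  = brc (U 1) q.
Proof.
pose D k := fun i : 'I_N =>
  if [&& (k <= i)%N, (i < n.+1)%N & (0 < i)%N] then Wc (i : nat)%:Z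
  else if (i : nat) == n.+1 then q else U ((i : nat)%:Z + 1).
have step : forall j, (j <= n)%N ->
    \det (rowsM (D (n.+1 - j)%N)) = (-a) ^+ j * \det (rowsM (D n.+1)).
  elim=> [|j IH] jn; first by rewrite subn0 expr0 mul1r.
  have jn' : (j <= n)%N by apply: ltnW.
  set k := (n.+1 - j.+1)%N.
  have ek : (n.+1 - j)%N = k.+1 by rewrite /k subSS subSn.
  have k1 : (1 <= k)%N by rewrite /k subSS subn_gt0.
  have kn : (k <= n)%N by rewrite /k subSS leq_subr.
  rewrite exprS -mulrA -IH // ek.
  pose kk : 'I_N := inord k. pose km : 'I_N := inord k.-1.
  have vkk : (kk : nat) = k by rewrite inordK // ltnS ltnW.
  have vkm : (km : nat) = k.-1 by rewrite inordK // ltnS (leq_trans (leq_pred k)) // ltnW.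
  have kmk : km != kk.
    apply/negP => /eqP /(congr1 (@nat_of_ord N)); rewrite vkk vkm => e.
    by move/eqP: e; case: (k) k1 => // k' _; rewrite /= eqn_leq ltnn andbF.
  have -> : rowsM (D k) = rowsM (setr (D k.+1) kk ((-a) *: D k.+1 kk + D k.+1 km)).
    apply: rowsM_ext => i; rewrite /setr.
    have [->|nik] := eqVneq i kk.
      have kn1 : (k < n.+1)%N by rewrite ltnS.
      have e1 : (k == n.+1) = false by apply: ltn_eqF.
      have e2 : (k < k.-1)%N = false by rewrite ltnNge leq_pred.
      have e3 : (k.-1 == n.+1) = false.
        by apply: ltn_eqF; apply: leq_ltn_trans (leq_pred k) kn1.
      rewrite /D vkk vkm leqnn kn1 k1 ltnn e1 e2 e3 /=.
      rewrite [(k.-1)%:Z + 1]intS' (ltn_predK k1) /Wc scaleNr addrC.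
      by [].
    rewrite /D.
    have -> : (k.+1 <= i)%N = (k <= i)%N.
      rewrite ltn_neqAle.
      have -> : (k != nat_of_ord i).
        apply: contra nik => /eqP e; apply/eqP/val_inj; rewrite /= -e; exact: esym vkk.
      done.
    done.
  by rewrite -/(detr (D k.+1) kk _) detrD detrZ detr_self detr_dup // addr0.
have h := step n (leqnn n); rewrite subSnn in h.
transitivity ((-a) ^+ n * \det (rowsM (D n.+1))).
  congr (_ * \det _); apply: rowsM_ext => i; rewrite /setr /D.
  case: (eqVneq i ord_max) => [->|nim]; first by rewrite /= ltnn andbF /= eqxx.
  have -> : [&& (n < i)%N, (i < n.+1)%N & (0 < i)%N] = false.
    by rewrite ltnS; case: (ltnP n i).
  have -> : ((i : nat) == n.+1) = false.
    by apply/negbTE; apply: contra nim => /eqP e; apply/eqP/val_inj.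
  done.
rewrite -h /brc /br; congr (\det _); apply: rowsM_ext => i; rewrite /setr /D.
case: (eqVneq i ord0) => [->//|ni0].
have i0 : (0 < i)%N by rewrite lt0n; apply: contra ni0 => /eqP e; apply/eqP/val_inj.
case: (eqVneq i ord_max) => [->|nim]; first by rewrite /= ltnn /= eqxx.
have -> : (i < n.+1)%N.
  rewrite ltn_neqAle -ltnS ltn_ord andbT; apply: contra nim => /eqP e; apply/eqP/val_inj; exact: e.
by rewrite i0.
Qed.

Lemma modB q : forall d, (d <= n)%N ->
  brc (U (n.+1 - d)%N%:Z) q = a ^+ d * brc (U n.+1%:Z) q.
Proof.
elim=> [|d IH] dn; first by rewrite subn0 expr0 mul1r.
have dn' : (d <= n)%N by apply: ltnW.
set j := (n.+1 - d.+1)%N.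
have ej : (j%:Z + 1 = (n.+1 - d)%N%:Z)%R by rewrite intS' /j subSS subSn.
have j1 : (1 <= j)%N by rewrite /j subSS subn_gt0.
have jn : (j <= n)%N by rewrite /j subSS leq_subr.
have -> : U j%:Z = Wc j%:Z + a *: U (j%:Z + 1) by rewrite /Wc subrK.
rewrite /brc in IH *; rewrite brDl brZl ej IH // exprS mulrA.
have jN : (j < N)%N by rewrite ltnS ltnW.
have vj : ((inord j : 'I_N) : nat) = j by rewrite inordK.
have -> : Wc j%:Z = fW (inord j) by rewrite /fW vj.
rewrite br_midl ?add0r //.
  apply/negP => /eqP /(congr1 (@nat_of_ord N)); rewrite vj /= => e.
  by move: j1; rewrite e.
apply/negP => /eqP /(congr1 (@nat_of_ord N)); rewrite vj /= => e.
by move: jn; rewrite e ltnn.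
Qed.

Lemma perm_T4 : tauG (fun j => Wc (j - 1)) = (-1) ^+ n * brc (Wc (-1)) (Wc 0).
Proof.
pose A := rowsM (setr (setr fW ord_max (Wc 0)) ord0 (Wc (-1))).
pose s : 'S_N := lift_perm (inord 1) ord_max 1.
have v1 : ((inord 1 : 'I_N) : nat) = 1%N by rewrite inordK.
rewrite /tauG; have -> : rowsM (fun i : 'I_N => Wc ((i : nat)%:Z - 1)) = row_perm s A.
  apply/matrixP => i j; rewrite !mxE /s.
  case: (unliftP (inord 1) i) => [k ->|->]; last first.
    rewrite lift_perm_id v1 /setr /= eqxx !mxE subrr add0r.
    by [].
  rewrite lift_perm_lift perm1 /setr.
  have [->|kpos] := eqVneq k ord0.
    have -> : lift (inord 1) (ord0 : 'I_n.+1) = ord0 :> 'I_N.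
      by apply/val_inj; rewrite /= /bump v1.
    have -> : lift ord_max (ord0 : 'I_n.+1) = ord0 :> 'I_N by apply/val_inj.
    by rewrite eqxx !mxE sub0r.
  have kn0 : (k : nat) != 0%N by apply: contra kpos => /eqP e; apply/eqP/val_inj.
  have vl : ((lift (inord 1) k : 'I_N) : nat) = k.+1.
    by rewrite /= /bump v1 lt0n kn0 add1n.
  have vm : ((lift ord_max k : 'I_N) : nat) = k.
    by rewrite /= /bump /= leqNgt ltn_ord.
  have h0 : (lift ord_max k == ord0 :> 'I_N) = false.
    apply/negP => /eqP /(congr1 (@nat_of_ord N)); rewrite vm => e.
    by move: kn0; rewrite e.
  have h1 : (lift ord_max k == ord_max :> 'I_N) = false.
    apply/negP => /eqP /(congr1 (@nat_of_ord N)); rewrite vm => e.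
    by move: (ltn_ord k); rewrite e ltnn.
  rewrite h0 h1 /fW vm vl -intS' addrK.
  by rewrite !mxE.
rewrite row_permE det_mulmx det_perm odd_lift_perm odd_perm1 v1 /= addbF.
by rewrite negbK signr_odd.
Qed.


Lemma cas_main :
  a^-1 * (taudG U * tauG Wc - tauG U * taudG Wc) - tauG U * tauG Wc
    + tauG (fun j => U (j + 1)) * tauG (fun j => Wc (j - 1)) = 0.
Proof.
set z := U n.+1%:Z. set v := U n.+2%:Z. set x := Wc (-1). set y := Wc 0.
have hU1 : forall q, brc (U 1) q = a ^+ n * brc z q.
  by move=> q; have := modB q (leqnn n); rewrite subSnn.
have UW : forall j, U j = Wc j + a *: U (j + 1) by move=> j; rewrite /Wc subrK.
have pp : forall p, brc p p = 0 by move=> p; apply: (br_pp fW i01c).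
have e01 : (0 + 1 : int) = 1 by [].
have em : (-1 + 1 : int) = 0 by [].
have WN : Wc n.+1%:Z = z - a *: v by rewrite /Wc intS'.
have T1 : tauG U = brc y z.
  have -> : tauG U = \det (rowsM (setr (fun i : 'I_N => U (i : nat)%:Z) ord0 (U 0))).
    rewrite /tauG; congr (\det _); apply: rowsM_ext => i; rewrite /setr.
    by case: eqP => // ->.
  rewrite conv_up -/z (UW 0) e01 /brc brDl brZl -/brc hU1 pp.
  by rewrite !mulr0 addr0.
have T1' : taudG U = brc x z + a * brc y z.
  rewrite /taudG conv_up -/z (UW (-1)) em (UW 0) e01 /brc brDl brZl brDl brZl -/brc.
  by rewrite hU1 pp !mulr0 addr0.
have T2 : tauG Wc = brc y z - a * brc y v.
  have -> : tauG Wc = brc y (Wc n.+1%:Z).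
    rewrite /tauG /brc /br; congr (\det _); apply: rowsM_ext => i; rewrite /setr.
    case: (eqVneq i ord0) => [->//|_]; case: (eqVneq i ord_max) => [->//|_].
    by [].
  by rewrite WN /brc brBr ?i01c // brZr ?i01c.
have T2' : taudG Wc = brc x z - a * brc x v.
  have -> : taudG Wc = brc x (Wc n.+1%:Z).
    rewrite /taudG /brc /br; congr (\det _); apply: rowsM_ext => i; rewrite /setr.
    case: (eqVneq i ord0) => [e0|_] //; case: (eqVneq i ord_max) => [->|_] //.
  by rewrite WN /brc brBr ?i01c // brZr ?i01c.
have hs : (-1) ^+ n * (-1) ^+ n = 1 :> F by rewrite -exprMn mulrNN mulr1 expr1n.
have T3 : tauG (fun j => U (j + 1)) = (-1) ^+ n * brc z v.
  have h := conv_down v; rewrite hU1 in h.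
  have e : \det (rowsM (setr (fun i : 'I_N => U ((i : nat)%:Z + 1)) ord_max v))
      = tauG (fun j => U (j + 1)).
    rewrite /tauG; congr (\det _); apply: rowsM_ext => i; rewrite /setr.
    case: (eqVneq i ord_max) => [->|_] //; by rewrite /= intS'.
  rewrite e exprNn -mulrA mulrCA in h.
  have h2 := mulfI (expf_neq0 n a0) h.
  by rewrite -h2 mulrA hs mul1r.
rewrite T1 T1' T2 T2' T3 perm_T4.
have -> : (-1) ^+ n * brc z v * ((-1) ^+ n * brc x y) = brc x y * brc z v.
  by rewrite mulrACA hs mul1r mulrC.
rewrite -[RHS](plucker fW i01c x y z v) -/brc.
by field.
Qed.
End Cas.

Lemma cas_one (F : fieldType) (a : F) (U : int -> 'rV[F]_1) : a != 0 ->
  let W := fun j : int => U j - a *: U (j + 1) in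
  a^-1 * (taudG U * tauG W - tauG U * taudG W) - tauG U * tauG W
    + tauG (fun j => U (j + 1)) * tauG (fun j => W (j - 1)) = 0.
Proof.
move=> a0 W.
have t1 : forall V : int -> 'rV[F]_1, tauG V = V 0 0 0.
  by move=> V; rewrite /tauG det_mx11 mxE.
have t2 : forall V : int -> 'rV[F]_1, taudG V = V (-1) 0 0.
  by move=> V; rewrite /taudG det_mx11 mxE /setr.
rewrite !t1 !t2 /W !mxE /=.
have -> : (0 - 1 + 1 : int) = 0 by [].

by field.
Qed.

Section An.
Variable R : realType.
Local Notation C := R[i].

Lemma ReD (z w : C) : complex.Re (z + w) = complex.Re z + complex.Re w.
Proof. by case: z; case: w. Qed.
Lemma ImD (z w : C) : complex.Im (z + w) = complex.Im z + complex.Im w.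
Proof. by case: z; case: w. Qed.
Lemma ReM (z w : C) : complex.Re (z * w) = complex.Re z * complex.Re w - complex.Im z * complex.Im w.
Proof. by case: z => a b; case: w => c d. Qed.
Lemma ImM (z w : C) : complex.Im (z * w) = complex.Re z * complex.Im w + complex.Im z * complex.Re w.
Proof. by case: z => a b; case: w => c d. Qed.

Definition CD (f : R -> C) (x : R) (d : C) :=
  is_derive x (1:R) (fun t => complex.Re (f t)) (complex.Re d) /\
  is_derive x (1:R) (fun t => complex.Im (f t)) (complex.Im d).

Lemma CD_cderiv f x d : CD f x d -> cderiv f x = d.
Proof. by case=> h1 h2; rewrite /cderiv !derive1E !derive_val; case: d {h1 h2}. Qed.

Lemma CD_ext f g x d : (forall t, f t = g t) -> CD f x d -> CD g x d.
Proof. by move=> e; have -> : g = f by apply: funext => t; rewrite e. Qed.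

Lemma CD_eq f x d d' : d = d' -> CD f x d -> CD f x d'.
Proof. by move=> ->. Qed.

Lemma CD_cst (c : C) x : CD (fun _ => c) x 0.
Proof. by split; apply: is_derive_cst. Qed.

Lemma CD_add f g x df dg : CD f x df -> CD g x dg ->
  CD (fun t => f t + g t) x (df + dg).
Proof.
case=> f1 f2 [g1 g2]; split.
  have -> : (fun t => complex.Re (f t + g t))
     = (fun t => complex.Re (f t)) + (fun t => complex.Re (g t)).
    by apply: funext => t; rewrite ReD.
  by rewrite ReD; apply: is_deriveD.
have -> : (fun t => complex.Im (f t + g t))
   = (fun t => complex.Im (f t)) + (fun t => complex.Im (g t)).
  by apply: funext => t; rewrite ImD.
by rewrite ImD; apply: is_deriveD.
Qed.

Lemma sc (a b : R) : a *: b = a * b. Proof. by []. Qed.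

Lemma CD_mul f g x df dg : CD f x df -> CD g x dg ->
  CD (fun t => f t * g t) x (df * g x + f x * dg).
Proof.
case=> f1 f2 [g1 g2]; split.
  have -> : (fun t => complex.Re (f t * g t))
     = (fun t => complex.Re (f t)) * (fun t => complex.Re (g t))
       - (fun t => complex.Im (f t)) * (fun t => complex.Im (g t)).
    by apply: funext => t; rewrite ReM.
  apply: (is_derive_eq (is_deriveB (is_deriveM f1 g1) (is_deriveM f2 g2))).
  by rewrite ReD !ReM /= !sc; ring.
have -> : (fun t => complex.Im (f t * g t))
   = (fun t => complex.Re (f t)) * (fun t => complex.Im (g t))
     + (fun t => complex.Im (f t)) * (fun t => complex.Re (g t)).
  by apply: funext => t; rewrite ImM.
apply: (is_derive_eq (is_deriveD (is_deriveM f1 g2) (is_deriveM f2 g1))).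
by rewrite ImD !ImM /= !sc; ring.
Qed.


Lemma der_lin (ar br x : R) : is_derive x (1:R) (fun t : R => ar * t + br) ar.
Proof.
have -> : (fun t : R => ar * t + br) = ar \*: (@id R) + cst br.
  by apply: funext => t.
apply: (is_derive_eq (is_deriveD (is_deriveZ ar (is_derive_id x 1)) (is_derive_cst br x 1))).
by rewrite addr0 sc mulr1.
Qed.

Lemma der_comp (f : R -> R) (df : R -> R) ar br x :
  (forall y, is_derive y (1:R) f (df y)) ->
  is_derive x (1:R) (fun t => f (ar * t + br)) (df (ar * x + br) * ar).
Proof. by move=> h; exact: (is_derive1_comp (h _) (der_lin ar br x)). Qed.

Lemma CD_cexp (al be : C) x :
  CD (fun t => cexp (al * t%:C + be)) x (al * cexp (al * x%:C + be)).
Proof.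
case: al => ar ai; case: be => br bi.
have eR : forall t, complex.Re (cexp ((ar +i* ai) * t%:C + (br +i* bi)))
    = expR (ar * t + br) * cos (ai * t + bi).
  by move=> t; rewrite /cexp /= !mulr0 subr0 add0r mul0r subr0.
have eI : forall t, complex.Im (cexp ((ar +i* ai) * t%:C + (br +i* bi)))
    = expR (ar * t + br) * sin (ai * t + bi).
  by move=> t; rewrite /cexp /= !mulr0 subr0 add0r mul0r addr0.
have dE := @der_comp expR expR ar br x (@is_derive_expR R).
have dC := @der_comp cos (fun y => - sin y) ai bi x (@is_derive_cos R).
have dS := @der_comp sin cos ai bi x (@is_derive_sin R).
split.
  have -> : (fun t => complex.Re (cexp ((ar +i* ai) * t%:C + (br +i* bi))))
     = (fun t => expR (ar * t + br)) * (fun t => cos (ai * t + bi)).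
    by apply: funext => t; rewrite eR.
  apply: (is_derive_eq (is_deriveM dE dC)).
  rewrite ReM eR eI /= !sc; ring.
have -> : (fun t => complex.Im (cexp ((ar +i* ai) * t%:C + (br +i* bi))))
   = (fun t => expR (ar * t + br)) * (fun t => sin (ai * t + bi)).
  by apply: funext => t; rewrite eI.
apply: (is_derive_eq (is_deriveM dE dS)).
rewrite ImM eR eI /= !sc; ring.
Qed.

Lemma CD_sum (I : Type) (r : seq I) (F : I -> R -> C) (d : I -> C) x :
  (forall i, CD (F i) x (d i)) ->
  CD (fun t => \sum_(i <- r) F i t) x (\sum_(i <- r) d i).
Proof.
move=> h; elim: r => [|a r IH].
  by apply: (CD_ext (f := fun _ => 0)) => [t|]; rewrite ?big_nil //; apply: CD_cst.
rewrite big_cons; apply: (CD_ext (f := fun t => F a t + \sum_(i <- r) F i t)).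
  by move=> t; rewrite big_cons.
exact: CD_add.
Qed.

Lemma CD_prod (I : eqType) (r : seq I) (F : I -> R -> C) (d : I -> C) x :
  uniq r -> (forall i, CD (F i) x (d i)) ->
  CD (fun t => \prod_(i <- r) F i t) x
     (\sum_(k <- r) \prod_(i <- r) (if i == k then d i else F i x)).
Proof.
move=> + h; elim: r => [|a r IH] /=.
  move=> _; apply: (CD_ext (f := fun _ => 1)) => [t|]; first by rewrite big_nil.
  by rewrite big_nil; apply: CD_cst.
case/andP=> ar ur.
apply: (CD_ext (f := fun t => F a t * \prod_(i <- r) F i t)).
  by move=> t; rewrite big_cons.
apply: CD_eq; last exact: CD_mul (h a) (IH ur).
rewrite big_cons big_cons eqxx; congr (_ * _ + _).
  apply: eq_big_seq => i ir.
  by have -> : (i == a) = false by apply/negbTE; apply: contraNneq ar => <-.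
rewrite big_distrr /=; apply: eq_big_seq => k kr; rewrite big_cons.
by have -> : (a == k) = false by apply/negbTE; apply: contraNneq ar => ->.
Qed.

Lemma CD_det n (G : R -> 'M[C]_n) (G' : 'M[C]_n) x :
  (forall i j, CD (fun t => G t i j) x (G' i j)) ->
  CD (fun t => \det (G t)) x
     (\sum_r \det (rowsM (setr (fun i => row i (G x)) r (row r G')))).
Proof.
move=> h.
have hs : forall s : 'S_n, CD (fun t => (-1) ^+ s * \prod_i G t i (s i)) x
   ((-1) ^+ s * \sum_k \prod_i (if i == k then G' i (s i) else G x i (s i))).
  move=> s; apply: CD_eq; last first.
    apply: CD_mul; first exact: CD_cst.
    exact: (@CD_prod _ (index_enum 'I_n) (fun i t => G t i (s i)) (fun i => G' i (s i)) x
              (index_enum_uniq _) (fun i => h i (s i))).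
  by rewrite mul0r add0r.
apply: (CD_ext (f := fun t => \sum_(s : 'S_n) (-1) ^+ s * \prod_i G t i (s i))) => [t|].
  by [].
apply: CD_eq; last exact: CD_sum hs.
transitivity (\sum_(s : 'S_n) \sum_k (-1) ^+ s *
    \prod_i (if i == k then G' i (s i) else G x i (s i))).
  by apply: eq_bigr => s _; rewrite mulr_sumr.
rewrite exchange_big; apply: eq_bigr => r _; rewrite /determinant.
apply: eq_bigr => s _; congr (_ * _); apply: eq_bigr => i _.
by rewrite !mxE /setr; case: eqP => [->|_]; rewrite !mxE.
Qed.

End An.

Lemma cas_gen (F : fieldType) (n : nat) (a : F) (U : int -> 'rV[F]_n.+1) : a != 0 ->
  let W := fun j : int => U j - a *: U (j + 1) in
  a^-1 * (taudG U * tauG W - tauG U * taudG W) - tauG U * tauG W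
    + tauG (fun j => U (j + 1)) * tauG (fun j => W (j - 1)) = 0.
Proof.
case: n U => [|n] U a0; first exact: cas_one.
exact: (cas_main U a0).
Qed.

Lemma tauG_ext (F : fieldType) n (V V' : int -> 'rV[F]_n) :
  (forall j, V j = V' j) -> tauG V = tauG V'.
Proof. by move=> e; rewrite /tauG; congr (\det _); apply: rowsM_ext => i; rewrite e. Qed.

Lemma taudG_ext (F : fieldType) n (V V' : int -> 'rV[F]_n.+1) :
  (forall j, V j = V' j) -> taudG V = taudG V'.
Proof.
by move=> e; rewrite /taudG; congr (\det _); apply: rowsM_ext => i; rewrite /setr !e.
Qed.

Section Casorati.
Variable R : realType.
Local Notation C := R[i].
Variables (N : nat) (a c : C) (ci di p q xi0 eta0 : 'I_N.+1 -> C).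
Hypotheses (hp : forall i, p i != 0) (hq : forall i, q i != 0)
  (hap : forall i, 1 - a * p i != 0) (haq : forall i, 1 - a * q i != 0)
  (hcp : forall i, 1 - c * p i != 0) (hcq : forall i, 1 - c * q i != 0).

Local Notation phi := (phi1 a c ci di p q xi0 eta0).

Definition Ucas (n m k : int) (x : R) : int -> 'rV[C]_N.+1 :=
  fun j => \row_i phi i (n + j) m k x.

Lemma tau1E n m k x : tau1 a c ci di p q xi0 eta0 n m k x = tauG (Ucas n m k x).
Proof.
rewrite /tau1 /tauG -det_tr; congr (\det _); apply/matrixP => j i.
by rewrite !mxE.
Qed.

Lemma unitC (z : C) : z != 0 -> z \is a GRing.unit. Proof. by rewrite unitfE. Qed.

Lemma phi_k i n m k x :
  phi i n m k x = phi i n m (k + 1) x - a * phi i (n + 1) m (k + 1) x.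
Proof.
rewrite /phi1.
have e1 : forall u : C, u != 0 -> u ^ (- k) = u ^ (- (k + 1)) * u.
  by move=> u u0; rewrite -[in LHS](_ : - (k + 1) + 1 = - k) ?exprzDr ?expr1z ?unitC //; rewrite opprD addrNK.
rewrite (e1 _ (hap i)) (e1 _ (haq i)).
rewrite !exprzDr ?unitC // !expr1z.
ring.
Qed.

Lemma phi_m i n m k x :
  phi i n (m + 1) k x = phi i n m k x - c * phi i (n + 1) m k x.
Proof.
rewrite /phi1 !exprzDr ?unitC // !expr1z.
ring.
Qed.

Lemma phi_der i n m k x : CD (fun t => phi i n m k t) x (phi i (n - 1) m k x).
Proof.
rewrite /phi1; apply: CD_eq; last first.
  by apply: CD_add; apply: CD_mul; [apply: CD_cst | apply: CD_cexp | apply: CD_cst | apply: CD_cexp].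
rewrite !exprzDr ?unitC // !exprN1.
ring.
Qed.

Lemma tau1_der n m k x :
  cderiv (tau1 a c ci di p q xi0 eta0 n m k) x = taudG (Ucas n m k x).
Proof.
apply: CD_cderiv.
apply: (CD_ext (f := fun t => \det (rowsM (fun j : 'I_N.+1 => Ucas n m k t (j : nat)%:Z))))
  => [t|]; first by rewrite tau1E.
apply: CD_eq; last first.
  apply: (@CD_det _ _ _ (rowsM (fun j : 'I_N.+1 => Ucas n m k x ((j : nat)%:Z - 1)))) => j i.
  apply: (CD_ext (f := fun t => phi i (n + (j : nat)%:Z) m k t)) => [t|]; first by rewrite !mxE.
  by rewrite !mxE addrA; apply: phi_der.
rewrite (bigD1 ord0) //= big1 ?addr0.
  rewrite /taudG; congr (\det _); apply: rowsM_ext => i; rewrite /setr.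
  by case: eqP => // _; rewrite row_rowsM.
move=> r r0.
have r1 : (0 < r)%N by rewrite lt0n; apply: contra r0 => /eqP e; apply/eqP/val_inj.
pose r' : 'I_N.+1 := inord r.-1.
have vr : (r' : nat) = r.-1 by rewrite inordK // (leq_ltn_trans (leq_pred r)).
have rr : r' != r.
  apply/negP => /eqP /(congr1 (@nat_of_ord _)); rewrite vr => e.
  by move: r1 e; case: (nat_of_ord r) => //= k' _ /eqP; rewrite eqn_leq ltnn andbF.
rewrite row_rowsM.
have -> : Ucas n m k x ((r : nat)%:Z - 1) = (fun i => row i (rowsM (fun j : 'I_N.+1 => Ucas n m k x (j : nat)%:Z))) r'.
  rewrite row_rowsM vr; congr (Ucas _ _ _ _ _).
  by rewrite -(ltn_predK r1) -intS' addrK.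
exact: detr_dup.
Qed.

Lemma cas_pair : a != 0 -> c != 0 ->
  bilinear_pair a c (tau1 a c ci di p q xi0 eta0).
Proof.
move=> a0 c0 n m k x; split.
  set U := Ucas n m (k + 1) x.
  have hW : forall j, Ucas n m k x j = U j - a *: U (j + 1).
    by move=> j; apply/rowP => i; rewrite !mxE phi_k addrA.
  rewrite /hirota !tau1_der !tau1E (taudG_ext hW) (tauG_ext hW).
  have -> : tauG (Ucas (n + 1) m (k + 1) x) = tauG (fun j => U (j + 1)).
    apply: tauG_ext => j; apply/rowP => i; rewrite !mxE.
    by have -> : n + 1 + j = n + (j + 1) by ring.
  have -> : tauG (Ucas (n - 1) m k x) = tauG (fun j => U (j - 1) - a *: U (j - 1 + 1)).
    apply: tauG_ext => j; rewrite -hW; apply/rowP => i; rewrite !mxE.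
    by have -> : n - 1 + j = n + (j - 1) by ring.
  exact: (cas_gen U a0).
set U := Ucas n m k x.
have hW : forall j, Ucas n (m + 1) k x j = U j - c *: U (j + 1).
  by move=> j; apply/rowP => i; rewrite !mxE phi_m addrA.
rewrite /hirota !tau1_der !tau1E (taudG_ext hW) (tauG_ext hW).
have -> : tauG (Ucas (n + 1) m k x) = tauG (fun j => U (j + 1)).
  apply: tauG_ext => j; apply/rowP => i; rewrite !mxE.
  by have -> : n + 1 + j = n + (j + 1) by ring.
have -> : tauG (Ucas (n - 1) (m + 1) k x) = tauG (fun j => U (j - 1) - c *: U (j - 1 + 1)).
  apply: tauG_ext => j; rewrite -hW; apply/rowP => i; rewrite !mxE.
  by have -> : n - 1 + j = n + (j - 1) by ring.
exact: (cas_gen U c0).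
Qed.

End Casorati.

Lemma cexpD (R : realType) (u v : R[i]) : cexp (u + v) = cexp u * cexp v.
Proof.
case: u => u1 u2; case: v => v1 v2; rewrite /cexp /= expRD cosD sinD.
congr (_ +i* _); ring.
Qed.

Section Gram.
Variable R : realType.
Local Notation C := R[i].
Variables (N : nat) (a c : C) (cij : 'I_N -> 'I_N -> C) (p q xi0 eta0 : 'I_N -> C).
Hypotheses (hp : forall i, p i != 0) (hq : forall j, q j != 0)
  (hpq : forall i j, p i + q j != 0)
  (hap : forall i, 1 - a * p i != 0) (haq : forall j, 1 + a * q j != 0)
  (hcp : forall i, 1 - c * p i != 0) (hcq : forall j, 1 + c * q j != 0).

Lemma unitC' (z : C) : z != 0 -> z \is a GRing.unit. Proof. by rewrite unitfE. Qed.
Hint Resolve unitC' : core.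

Definition Ag i (n m k : int) (x : R) : C :=
  p i ^ n * (1 - c * p i) ^ m * (1 - a * p i) ^ (- k) * cexp ((p i)^-1 * x%:C + xi0 i).
Definition Bg j (n m k : int) (x : R) : C :=
  ((- q j)^-1) ^ n * ((1 + c * q j)^-1) ^ m * ((1 + a * q j)^-1) ^ (- k)
    * cexp ((q j)^-1 * x%:C + eta0 j).
Definition Mat n m k x : 'M[C]_N :=
  \matrix_(i, j) (cij i j + (p i + q j)^-1 * (Ag i n m k x * Bg j n m k x)).

Lemma nz_inv (z : C) : z != 0 -> z^-1 != 0. Proof. by rewrite invr_eq0. Qed.
Lemma nzN (z : C) : z != 0 -> - z != 0. Proof. by rewrite oppr_eq0. Qed.

Lemma tau2E n m k x : tau2 a c cij p q xi0 eta0 n m k x = \det (Mat n m k x).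
Proof.
rewrite /tau2; congr (\det _); apply/matrixP => i j; rewrite !mxE /Ag /Bg.
have e1 : - (p i / q j) = p i * (- q j)^-1 by rewrite invrN mulrN.
rewrite e1 exprzMl ?unitC' ?nz_inv ?nzN //.
rewrite exprzMl ?unitC' ?nz_inv //.
rewrite exprzMl ?unitC' ?nz_inv //.
rewrite cexpD; ring.
Qed.

Lemma Ag_n i n m k x : Ag i (n + 1) m k x = p i * Ag i n m k x.
Proof. by rewrite /Ag exprzDr ?unitC' // expr1z; ring. Qed.
Lemma Ag_nm i n m k x : Ag i (n - 1) m k x = (p i)^-1 * Ag i n m k x.
Proof. by rewrite /Ag exprzDr ?unitC' // exprN1; ring. Qed.
Lemma Ag_m i n m k x : Ag i n (m + 1) k x = (1 - c * p i) * Ag i n m k x.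
Proof. by rewrite /Ag exprzDr ?unitC' // expr1z; ring. Qed.
Lemma Ag_k i n m k x : Ag i n m (k + 1) x = (1 - a * p i)^-1 * Ag i n m k x.
Proof. by rewrite /Ag opprD exprzDr ?unitC' // exprN1; ring. Qed.
Lemma Bg_n j n m k x : Bg j (n + 1) m k x = (- q j)^-1 * Bg j n m k x.
Proof. by rewrite /Bg exprzDr ?unitC' ?nz_inv ?nzN // expr1z; ring. Qed.
Lemma Bg_nm j n m k x : Bg j (n - 1) m k x = (- q j) * Bg j n m k x.
Proof. by rewrite /Bg exprzDr ?unitC' ?nz_inv ?nzN // exprN1 invrK; ring. Qed.
Lemma Bg_m j n m k x : Bg j n (m + 1) k x = (1 + c * q j)^-1 * Bg j n m k x.
Proof. by rewrite /Bg exprzDr ?unitC' ?nz_inv // expr1z; ring. Qed.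
Lemma Bg_k j n m k x : Bg j n m (k + 1) x = (1 + a * q j) * Bg j n m k x.
Proof. by rewrite /Bg opprD exprzDr ?unitC' ?nz_inv // exprN1 invrK; ring. Qed.

Lemma Ag_der i n m k x : CD (fun t => Ag i n m k t) x ((p i)^-1 * Ag i n m k x).
Proof.
rewrite /Ag; apply: CD_eq; last by apply: CD_mul; [apply: CD_cst | apply: CD_cexp].
rewrite /=; ring.
Qed.
Lemma Bg_der j n m k x : CD (fun t => Bg j n m k t) x ((q j)^-1 * Bg j n m k x).
Proof.
rewrite /Bg; apply: CD_eq; last by apply: CD_mul; [apply: CD_cst | apply: CD_cexp].
rewrite /=; ring.
Qed.

Definition colv (f : 'I_N -> C) : 'cV[C]_N := \col_i f i.
Definition rowv (f : 'I_N -> C) : 'rV[C]_N := \row_i f i.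

Lemma tau2_der n m k x :
  cderiv (tau2 a c cij p q xi0 eta0 n m k) x
  = \det (Mat n m k x + colv (fun i => (p i)^-1 * Ag i n m k x)
                         *m rowv (fun j => (q j)^-1 * Bg j n m k x))
    - \det (Mat n m k x).
Proof.
apply: CD_cderiv.
apply: (CD_ext (f := fun t => \det (Mat n m k t))) => [t|]; first by rewrite tau2E.
apply: CD_eq; last first.
  apply: (@CD_det _ _ _ (\matrix_(i, j) ((p i)^-1 * Ag i n m k x * ((q j)^-1 * Bg j n m k x)))) => i j.
  apply: (CD_ext (f := fun t => cij i j + (p i + q j)^-1 * (Ag i n m k t * Bg j n m k t))).
    by move=> t; rewrite !mxE.
  apply: CD_eq; last first.
    apply: CD_add; first exact: CD_cst.
    apply: CD_mul; first exact: CD_cst.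
    exact: CD_mul (Ag_der i n m k x) (Bg_der j n m k x).
  rewrite !mxE; field.
  by rewrite hpq hp hq.
rewrite det_rank1 addrAC subrr add0r; apply: eq_bigr => r _.
have -> : row r (\matrix_(i, j) ((p i)^-1 * Ag i n m k x * ((q j)^-1 * Bg j n m k x)))
   = colv (fun i => (p i)^-1 * Ag i n m k x) r 0 *: rowv (fun j => (q j)^-1 * Bg j n m k x).
  by apply/rowP => j; rewrite !mxE.
by rewrite -detrZ.
Qed.

Lemma Mat_eq (M M' : 'M[C]_N) (u1 u2 : 'cV[C]_N) (b d : 'rV[C]_N) x1 x2 y1 y2 :
  (forall i j, M' i j = M i j + u1 i 0 * (x1 * b 0 j + x2 * d 0 j)
                        + u2 i 0 * (y1 * b 0 j + y2 * d 0 j)) ->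
  \det M' = Qg M u1 u2 (x1 *: b + x2 *: d) (y1 *: b + y2 *: d).
Proof.
move=> e; rewrite /Qg; congr (\det _); apply/matrixP => i j.
by rewrite e !mxE !big_ord1 !mxE.
Qed.

Lemma gram_pair : a != 0 -> c != 0 -> bilinear_pair a c (tau2 a c cij p q xi0 eta0).
Proof.
move=> a0 c0 n m k x; split.
  set M := Mat n m k x.
  set A := fun i => Ag i n m k x. set B := fun j => Bg j n m k x.
  set u1 := colv (fun i => (1 - a * p i)^-1 * A i).
  set u2 := colv (fun i => (p i)^-1 * A i).
  set b := rowv B. set d := rowv (fun j => (q j)^-1 * B j).
  have [E [P1 [P2 [S1 [S2 [Z [HQ Pl]]]]]]] := gram_core M u1 u2 b d.
  rewrite /hirota !tau2_der !tau2E.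
  have h0 : \det M = E - (0 * P1 + 0 * P2) - (0 * S1 + 0 * S2) + (0 * 0 - 0 * 0) * Z.
    by rewrite -HQ; apply: Mat_eq => i j; ring.
  have h1 : \det (Mat n m (k + 1) x)
      = E - (0 * P1 + 0 * P2) - (a * S1 + 0 * S2) + (a * 0 - 0 * 0) * Z.
    rewrite -HQ; apply: Mat_eq => i j.
    rewrite /M /u1 /u2 /b /d /colv /rowv !mxE Ag_k Bg_k /A /B.
    by field; rewrite ?hq ?hp ?hap ?haq ?hcp ?hcq ?hpq ?a0 ?c0.
  have h2 : \det (Mat (n + 1) m (k + 1) x)
      = E - (0 * P1 + 0 * P2) - (0 * S1 + (-1) * S2) + (0 * 0 - (-1) * 0) * Z.
    rewrite -HQ; apply: Mat_eq => i j.
    rewrite /M /u1 /u2 /b /d /colv /rowv !mxE Ag_k Bg_k Ag_n Bg_n /A /B.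
    by field; rewrite ?hq ?hp ?hap ?haq ?hcp ?hcq ?hpq ?a0 ?c0.
  have h3 : \det (Mat (n - 1) m k x)
      = E - ((-1) * P1 + 0 * P2) - (0 * S1 + 0 * S2) + (0 * 0 - 0 * (-1)) * Z.
    rewrite -HQ; apply: Mat_eq => i j.
    rewrite /M /u1 /u2 /b /d /colv /rowv !mxE Ag_nm Bg_nm /A /B.
    by field; rewrite ?hq ?hp ?hap ?haq ?hcp ?hcq ?hpq ?a0 ?c0.
  have h4 : \det (M + colv (fun i => (p i)^-1 * Ag i n m k x)
                    *m rowv (fun j => (q j)^-1 * Bg j n m k x))
      = E - (0 * P1 + 1 * P2) - (0 * S1 + 0 * S2) + (0 * 1 - 0 * 0) * Z.
    rewrite -HQ; apply: Mat_eq => i j.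
    rewrite /M /u1 /u2 /b /d /colv /rowv !mxE ?big_ord1 !mxE /A /B.
    ring.
  have h5 : \det (Mat n m (k + 1) x + colv (fun i => (p i)^-1 * Ag i n m (k + 1) x)
                    *m rowv (fun j => (q j)^-1 * Bg j n m (k + 1) x))
      = E - (a * P1 + 1 * P2) - ((a + a ^+ 2) * S1 + a * S2)
          + ((a + a ^+ 2) * 1 - a * a) * Z.
    rewrite -HQ; apply: Mat_eq => i j.
    rewrite /M /u1 /u2 /b /d /colv /rowv !mxE ?big_ord1 !mxE !Ag_k !Bg_k /A /B.
    by field; rewrite ?hq ?hp ?hap ?haq ?hcp ?hcq ?hpq ?a0 ?c0.
  rewrite h0 h1 h2 h3 h4 h5 -[RHS]Pl.
  by field.
set M := Mat n m k x.
set A := fun i => Ag i n m k x. set B := fun j => Bg j n m k x.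
set u1 := colv A.
set u2 := colv (fun i => (p i)^-1 * A i).
set b := rowv (fun j => (1 + c * q j)^-1 * B j). set d := rowv (fun j => (q j)^-1 * B j).
have [E [P1 [P2 [S1 [S2 [Z [HQ Pl]]]]]]] := gram_core M u1 u2 b d.
rewrite /hirota !tau2_der !tau2E.
have h0 : \det M = E - (0 * P1 + 0 * P2) - (0 * S1 + 0 * S2) + (0 * 0 - 0 * 0) * Z.
  by rewrite -HQ; apply: Mat_eq => i j; ring.
have h1 : \det (Mat n (m + 1) k x)
    = E - (0 * P1 + 0 * P2) - ((- c) * S1 + 0 * S2) + ((- c) * 0 - 0 * 0) * Z.
  rewrite -HQ; apply: Mat_eq => i j.
  rewrite /M /u1 /u2 /b /d /colv /rowv !mxE Ag_m Bg_m /A /B.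
  by field; rewrite ?hq ?hp ?hap ?haq ?hcp ?hcq ?hpq ?a0 ?c0.
have h2 : \det (Mat (n + 1) m k x)
    = E - (0 * P1 + 0 * P2) - (0 * S1 + (-1) * S2) + (0 * 0 - (-1) * 0) * Z.
  rewrite -HQ; apply: Mat_eq => i j.
  rewrite /M /u1 /u2 /b /d /colv /rowv !mxE Ag_n Bg_n /A /B.
  by field; rewrite ?hq ?hp ?hap ?haq ?hcp ?hcq ?hpq ?a0 ?c0.
have h3 : \det (Mat (n - 1) (m + 1) k x)
    = E - ((-1) * P1 + 0 * P2) - (0 * S1 + 0 * S2) + (0 * 0 - 0 * (-1)) * Z.
  rewrite -HQ; apply: Mat_eq => i j.
  rewrite /M /u1 /u2 /b /d /colv /rowv !mxE Ag_m Bg_m Ag_nm Bg_nm /A /B.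
  by field; rewrite ?hq ?hp ?hap ?haq ?hcp ?hcq ?hpq ?a0 ?c0.
have h4 : \det (M + colv (fun i => (p i)^-1 * Ag i n m k x)
                  *m rowv (fun j => (q j)^-1 * Bg j n m k x))
    = E - (0 * P1 + 1 * P2) - (0 * S1 + 0 * S2) + (0 * 1 - 0 * 0) * Z.
  rewrite -HQ; apply: Mat_eq => i j.
  rewrite /M /u1 /u2 /b /d /colv /rowv !mxE ?big_ord1 !mxE /A /B.
  ring.
have h5 : \det (Mat n (m + 1) k x + colv (fun i => (p i)^-1 * Ag i n (m + 1) k x)
                  *m rowv (fun j => (q j)^-1 * Bg j n (m + 1) k x))
    = E - ((- c) * P1 + 1 * P2) - ((c ^+ 2 - c) * S1 + (- c) * S2)
        + ((c ^+ 2 - c) * 1 - (- c) * (- c)) * Z.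
  rewrite -HQ; apply: Mat_eq => i j.
  rewrite /M /u1 /u2 /b /d /colv /rowv !mxE ?big_ord1 !mxE !Ag_m !Bg_m /A /B.
  by field; rewrite ?hq ?hp ?hap ?haq ?hcp ?hcq ?hpq ?a0 ?c0.
rewrite h0 h1 h2 h3 h4 h5 -[RHS]Pl.
by field.
Qed.

End Gram.

Theorem lemma3 (R : realType) (N : nat) (a c : R[i]) :
  (0 < N)%N -> a != 0 -> c != 0 ->
  (forall (ci di p q xi0 eta0 : 'I_N -> R[i]),
      (forall i, p i != 0) -> (forall i, q i != 0) ->
      (forall i, 1 - a * p i != 0) -> (forall i, 1 - a * q i != 0) ->
      (forall i, 1 - c * p i != 0) -> (forall i, 1 - c * q i != 0) ->
      bilinear_pair a c (tau1 a c ci di p q xi0 eta0))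
  /\
  (forall (cij : 'I_N -> 'I_N -> R[i]) (p q xi0 eta0 : 'I_N -> R[i]),
      (forall i, p i != 0) -> (forall j, q j != 0) ->
      (forall i j, p i + q j != 0) ->
      (forall i, 1 - a * p i != 0) -> (forall j, 1 + a * q j != 0) ->
      (forall i, 1 - c * p i != 0) -> (forall j, 1 + c * q j != 0) ->
      bilinear_pair a c (tau2 a c cij p q xi0 eta0)).
Proof.
move=> N0 a0 c0; split.
  case: N N0 => [//|N'] _ ci di p q xi0 eta0 hp hq hap haq hcp hcq.
  by apply: cas_pair.
move=> cij p q xi0 eta0 hp hq hpq hap haq hcp hcq.
by apply: gram_pair.
Qed.
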